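(* Let $K$ be a compact symmetric subset of $\mathbb{R}^m$ containing $0$, of Euclidean diameter at most $\varepsilon$, and let $\hat K$ be its convex hull. For $n\in\mathbb N$ let $K^n=\{k_1+\dots+k_n : k_i\in K\}$. Then for every $n\in\mathbb N$, the Gromov–Hausdorff distance between $K^n$ and its convex hull, both equipped with the Euclidean distance, is at most $(m+1)\varepsilon$. *)

(* Defs.v *)
From HB Require Import structures.
From mathcomp Require Import all_boot all_order all_algebra.
From mathcomp Require Import all_classical all_reals all_analysis.
Set Implicit Arguments. Unset Strict Implicit. Unset Printing Implicit Defensive.
Import Order.TTheory GRing.Theory Num.Theory.
Import numFieldNormedType.Exports.
Local Open Scope classical_set_scope.
Local Open Scope ring_scope.

Definition euclid_norm (R : realType) (m : nat) (x : 'rV[R]_m) : R :=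
  Num.sqrt (\sum_(i < m) (x ord0 i) ^+ 2).

Definition euclid_dist (R : realType) (m : nat) (x y : 'rV[R]_m) : R := euclid_norm (x - y).

Definition conv_hull (R : realType) (m : nat) (A : set 'rV[R]_m) : set 'rV[R]_m :=
  [set x | exists (N : nat) (w : 'I_N -> R) (p : 'I_N -> 'rV[R]_m),
     (forall i, A (p i)) /\ (forall i, 0 <= w i) /\ (\sum_(i < N) w i = 1) /\
     x = \sum_(i < N) w i *: p i].

Definition msum_pow (R : realType) (m : nat) (K : set 'rV[R]_m) (n : nat)
  : set 'rV[R]_m :=
  [set x | exists k : 'I_n -> 'rV[R]_m, (forall i, K (k i)) /\ x = \sum_(i < n) k i].

Definition is_metric (R : realType) (Z : Type) (d : Z -> Z -> R) : Prop :=
  (forall x y, 0 <= d x y) /\ (forall x y, d x y = 0 <-> x = y) /\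
  (forall x y, d x y = d y x) /\ (forall x y z, d x z <= d x y + d y z).

Definition isometric_on (R : realType) (m : nat) (Z : Type) (d : Z -> Z -> R)
  (A : set 'rV[R]_m) (f : 'rV[R]_m -> Z) : Prop :=
  forall x y, A x -> A y -> d (f x) (f y) = euclid_dist x y.

(* Gromov-Hausdorff distance between (A, Euclidean) and (B, Euclidean) is at
   most r: d_GH = inf over metric spaces Z and isometric embeddings f, g of the
   Hausdorff distance d_H(f A, g B).  "inf <= r" is expressed as: for every
   e > 0 there are Z, f, g with every point of f A within r + e of g B and
   every point of g B within r + e of f A (i.e. d_H(fA, gB) <= r + e). *)
Definition GH_dist_le (R : realType) (m : nat) (A B : set 'rV[R]_m) (r : R) : Prop :=
  forall e : R, 0 < e ->
  exists (Z : Type) (d : Z -> Z -> R) (f g : 'rV[R]_m -> Z),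
    is_metric d /\ isometric_on d A f /\ isometric_on d B g /\
    (forall a, A a -> exists b, B b /\ d (f a) (g b) <= r + e) /\
    (forall b, B b -> exists a, A a /\ d (f a) (g b) <= r + e).

(* Main.v *)
Require Import Defs.
From HB Require Import structures.
From mathcomp Require Import all_boot all_order all_algebra.
From mathcomp Require Import all_classical all_reals all_analysis.
From mathcomp Require Import ring lra.
Import Order.TTheory GRing.Theory Num.Theory.
Import numFieldNormedType.Exports.
Local Open Scope classical_set_scope.
Local Open Scope ring_scope.

Lemma sq_ge0 (R : realType) (m : nat) (x : 'rV[R]_m) :
  0 <= \sum_(i < m) (x ord0 i) ^+ 2.
Proof. by apply: sumr_ge0 => i _; exact: sqr_ge0. Qed.

Lemma CS (R : realType) (m : nat) (x y : 'rV[R]_m) :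
  (\sum_(i < m) x ord0 i * y ord0 i) ^+ 2 <=
  (\sum_(i < m) (x ord0 i) ^+ 2) * (\sum_(i < m) (y ord0 i) ^+ 2).
Proof.
set a := \sum_(i < m) (x ord0 i) ^+ 2.
set b := \sum_(i < m) x ord0 i * y ord0 i.
set c := \sum_(i < m) (y ord0 i) ^+ 2.
have ha : 0 <= a by exact: sq_ge0.
have hc : 0 <= c by exact: sq_ge0.
have E : forall t, \sum_(i < m) (x ord0 i * t + y ord0 i) ^+ 2 = a * t ^+ 2 + b * (t *+ 2) + c.
  move=> t.
  rewrite (eq_bigr (fun i => (x ord0 i)^+2 * t ^+ 2 + (x ord0 i * y ord0 i) * (t *+ 2) + (y ord0 i)^+2)); last by move=> i _; ring.
  by rewrite !big_split /= -!mulr_suml.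
have H : forall t, 0 <= a * t ^+ 2 + b * (t *+ 2) + c.
  by move=> t; rewrite -E; apply: sumr_ge0 => i _; exact: sqr_ge0.
have [a0|apos] := eqVneq a 0.
  have x0 : forall i, x ord0 i = 0.
    move=> i; apply/eqP; rewrite -sqrf_eq0; apply/eqP.
    exact: (psumr_eq0P (fun j _ => sqr_ge0 (x ord0 j)) a0).
  have -> : b = 0 by rewrite /b big1 // => i _; rewrite x0 mul0r.
  by rewrite a0 expr0n /= mul0r.
have ap : 0 < a by rewrite lt_def apos ha.
have := H (- b / a).
have -> : a * (- b / a) ^+ 2 + b * ((- b / a) *+ 2) + c = c - b ^+ 2 / a.
  by field.
rewrite subr_ge0 ler_pdivrMr // => h.
by rewrite mulrC.
Qed.

Lemma norm_triangle (R : realType) (m : nat) (x y : 'rV[R]_m) :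
  euclid_norm (x + y) <= euclid_norm x + euclid_norm y.
Proof.
rewrite /euclid_norm.
set A := Num.sqrt (\sum_(i < m) (x ord0 i) ^+ 2).
set B := Num.sqrt (\sum_(i < m) (y ord0 i) ^+ 2).
have hA : 0 <= A := sqrtr_ge0 _.
have hB : 0 <= B := sqrtr_ge0 _.
rewrite -(ger0_norm (addr_ge0 hA hB)) -sqrtr_sqr ler_wsqrtr //.
have -> : \sum_(i < m) ((x + y) ord0 i) ^+ 2 =
   \sum_(i < m) (x ord0 i) ^+ 2 + (\sum_(i < m) x ord0 i * y ord0 i) *+ 2 +
   \sum_(i < m) (y ord0 i) ^+ 2.
  rewrite -sumrMnl -!big_split /=; apply: eq_bigr => i _; rewrite !mxE; ring.
have hb : \sum_(i < m) x ord0 i * y ord0 i <= A * B.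
  rewrite /A /B -sqrtrM ?sq_ge0 //.
  apply: le_trans (ler_norm _) _.
  rewrite -sqrtr_sqr ler_wsqrtr //; exact: CS.
rewrite sqrrD !sqr_sqrtr ?sq_ge0 //.
by rewrite lerD2r lerD2l lerMn2r.
Qed.

Lemma normZ (R : realType) (m : nat) (a : R) (x : 'rV[R]_m) :
  euclid_norm (a *: x) = `|a| * euclid_norm x.
Proof.
rewrite /euclid_norm -sqrtr_sqr -sqrtrM ?sqr_ge0 // mulr_sumr.
by congr Num.sqrt; apply: eq_bigr => i _; rewrite !mxE exprMn.
Qed.

Lemma normN (R : realType) (m : nat) (x : 'rV[R]_m) :
  euclid_norm (- x) = euclid_norm x.
Proof. by rewrite -scaleN1r normZ normrN normr1 mul1r. Qed.

Lemma norm0 (R : realType) (m : nat) : euclid_norm (0 : 'rV[R]_m) = 0.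
Proof. by rewrite -(scale0r (0 : 'rV[R]_m)) normZ normr0 mul0r. Qed.

Lemma norm_ge0 (R : realType) (m : nat) (x : 'rV[R]_m) : 0 <= euclid_norm x.
Proof. exact: sqrtr_ge0. Qed.

Lemma norm_eq0 (R : realType) (m : nat) (x : 'rV[R]_m) :
  euclid_norm x = 0 -> x = 0.
Proof.
move/eqP; rewrite /euclid_norm sqrtr_eq0 => h.
have h0 : \sum_(i < m) (x ord0 i) ^+ 2 = 0 by apply/eqP; rewrite eq_le h sq_ge0.
apply/rowP => i; rewrite mxE; apply/eqP; rewrite -sqrf_eq0; apply/eqP.
exact: (psumr_eq0P (fun j _ => sqr_ge0 (x ord0 j)) h0).
Qed.

Lemma norm_sum (R : realType) (m M : nat) (v : 'I_M -> 'rV[R]_m) :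
  euclid_norm (\sum_(j < M) v j) <= \sum_(j < M) euclid_norm (v j).
Proof.
elim: M v => [|M IH] v; first by rewrite !big_ord0 norm0.
rewrite !big_ord_recr; apply: le_trans; first exact: norm_triangle.
by rewrite lerD2r IH.
Qed.

Lemma euclid_metric (R : realType) (m : nat) : is_metric (@euclid_dist R m).
Proof.
rewrite /euclid_dist; split; first by move=> x y; exact: norm_ge0.
split.
  move=> x y; split; first by move/norm_eq0/eqP; rewrite subr_eq0 => /eqP.
  by move=> ->; rewrite subrr norm0.
split; first by move=> x y; rewrite -normN opprB.
move=> x y z; have -> : x - z = (x - y) + (y - z) by rewrite addrA subrK.
exact: norm_triangle.
Qed.

Lemma split_l (m n : nat) (i : 'I_m) : fintype.split (lshift n i) = inl i.
Proof. exact: (unsplitK (inl i)). Qed.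
Lemma split_r (m n : nat) (i : 'I_n) : fintype.split (rshift m i) = inr i.
Proof. exact: (unsplitK (inr i)). Qed.

Definition cat_fun (T : Type) (n1 n2 : nat) (f1 : 'I_n1 -> T) (f2 : 'I_n2 -> T)
  (i : 'I_(n1 + n2)) : T :=
  match fintype.split i with inl a => f1 a | inr b => f2 b end.

Arguments cat_fun {T n1 n2}.

Lemma cat_funP (T : Type) (n1 n2 : nat) (f1 : 'I_n1 -> T) (f2 : 'I_n2 -> T) (P : T -> Prop) :
  (forall i, P (f1 i)) -> (forall i, P (f2 i)) -> forall i, P (cat_fun f1 f2 i).
Proof. by move=> h1 h2 i; rewrite /cat_fun; case: (fintype.split i). Qed.

Lemma sum_cat (V : zmodType) (n1 n2 : nat) (f1 : 'I_n1 -> V) (f2 : 'I_n2 -> V) :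
  \sum_(i < n1 + n2) cat_fun f1 f2 i = \sum_(i < n1) f1 i + \sum_(i < n2) f2 i.
Proof.
rewrite big_split_ord /=; congr (_ + _); apply: eq_bigr => i _;
  by rewrite /cat_fun ?split_l ?split_r.
Qed.

Lemma sum_cat2 (V : zmodType) (n1 n2 : nat) (g : V -> V -> V) (f1 : 'I_n1 -> V) (f2 : 'I_n2 -> V)
   (h1 : 'I_n1 -> V) (h2 : 'I_n2 -> V) :
  \sum_(i < n1 + n2) g (cat_fun f1 f2 i) (cat_fun h1 h2 i) =
  \sum_(i < n1) g (f1 i) (h1 i) + \sum_(i < n2) g (f2 i) (h2 i).
Proof.
rewrite big_split_ord /=; congr (_ + _); apply: eq_bigr => i _;
  by rewrite /cat_fun ?split_l ?split_r.
Qed.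

Lemma msum0 (R : realType) (m : nat) (K : set 'rV[R]_m) (n : nat) :
  K 0 -> msum_pow K n 0.
Proof. by move=> K0; exists (fun _ => 0); split => //; rewrite big1. Qed.

Lemma msumD (R : realType) (m : nat) (K : set 'rV[R]_m) n1 n2 x y :
  msum_pow K n1 x -> msum_pow K n2 y -> msum_pow K (n1 + n2) (x + y).
Proof.
move=> [k1 [h1 ->]] [k2 [h2 ->]]; exists (cat_fun k1 k2); split.
  exact: cat_funP.
by rewrite sum_cat.
Qed.

Lemma msum_nat (R : realType) (m : nat) (K : set 'rV[R]_m) (q : 'rV[R]_m) (a : nat) :
  K q -> msum_pow K a (a%:R *: q).
Proof.
move=> Kq; elim: a => [|a IH].
  by rewrite scale0r; exists (fun _ => 0); split; [case | rewrite big_ord0].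
rewrite mulrSr scalerDl scale1r -addn1; apply: msumD => //.
by exists (fun _ => q); split => //; rewrite big_ord1.
Qed.

Lemma msum_mono (R : realType) (m : nat) (K : set 'rV[R]_m) n1 n2 x :
  K 0 -> (n1 <= n2)%N -> msum_pow K n1 x -> msum_pow K n2 x.
Proof.
move=> K0 le h; rewrite -(subnKC le) -[x]addr0; apply: msumD => //.
exact: msum0.
Qed.

Lemma msum_sum (R : realType) (m : nat) (K : set 'rV[R]_m) M (a : 'I_M -> nat)
   (q : 'I_M -> 'rV[R]_m) :
  K 0 -> (forall j, K (q j)) ->
  msum_pow K (\sum_(j < M) a j) (\sum_(j < M) (a j)%:R *: q j).
Proof.
move=> K0 Kq; elim: M a q Kq => [|M IH] a q Kq.
  by rewrite !big_ord0; exact: msum0.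
rewrite !big_ord_recr; apply: msumD; first exact: IH.
exact: msum_nat.
Qed.

Definition cone {R : realType} {m : nat} (K : set 'rV[R]_m) (s : R) (x : 'rV[R]_m) : Prop :=
  exists M (c : 'I_M -> R) (q : 'I_M -> 'rV[R]_m),
    (forall j, K (q j)) /\ (forall j, 0 <= c j) /\ \sum_(j < M) c j = s /\
    x = \sum_(j < M) c j *: q j.

Lemma cone0 (R : realType) (m : nat) (K : set 'rV[R]_m) : cone K 0 0.
Proof.
exists 0%N, (fun _ => 0), (fun _ => 0); split; first by case.
by split => //; rewrite !big_ord0.
Qed.

Lemma coneD (R : realType) (m : nat) (K : set 'rV[R]_m) s1 s2 x1 x2 :
  cone K s1 x1 -> cone K s2 x2 -> cone K (s1 + s2) (x1 + x2).
Proof.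
move=> [M1 [c1 [q1 [Kq1 [c1p [s1E ->]]]]]] [M2 [c2 [q2 [Kq2 [c2p [s2E ->]]]]]].
exists (M1 + M2)%N, (cat_fun c1 c2), (cat_fun q1 q2).
split; first exact: cat_funP.
split; first exact: (@cat_funP _ _ _ _ _ (fun r => 0 <= r)).
split; first by rewrite sum_cat s1E s2E.
rewrite big_split_ord /=; congr (_ + _); apply: eq_bigr => i _;
  by rewrite /cat_fun ?split_l ?split_r.
Qed.

Lemma cone_scale (R : realType) (m : nat) (K : set 'rV[R]_m) n w p :
  msum_pow K n p -> 0 <= w -> cone K (w * n%:R) (w *: p).
Proof.
move=> [k [Kk ->]] w0; exists n, (fun _ => w), k; split => //; split => //.
split; first by rewrite sumr_const card_ord mulr_natr.
by rewrite scaler_sumr.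
Qed.

Lemma hull_cone (R : realType) (m : nat) (K : set 'rV[R]_m) n N (w : 'I_N -> R) p :
  (forall i, msum_pow K n (p i)) -> (forall i, 0 <= w i) ->
  cone K (\sum_(i < N) w i * n%:R) (\sum_(i < N) w i *: p i).
Proof.
elim: N w p => [|N IH] w p hp hw; first by rewrite !big_ord0; exact: cone0.
rewrite !big_ord_recr; apply: coneD; first exact: IH.
exact: cone_scale.
Qed.
Lemma dep (R : realType) (m M : nat) (q : 'I_M -> 'rV[R]_m) :
  (m.+1 < M)%N -> exists mu : 'I_M -> R,
    (exists j, mu j != 0) /\ \sum_(j < M) mu j = 0 /\ \sum_(j < M) mu j *: q j = 0.
Proof.
move=> hM.
pose A : 'M[R]_(M, m + 1) := \matrix_(j, k) cat_fun (fun t => q j ord0 t) (fun _ => 1) k.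
have hA1 : forall j, A j (rshift m ord0) = 1.
  by move=> j; rewrite mxE /cat_fun split_r.
have hA2 : forall j t, A j (lshift 1 t) = q j ord0 t.
  by move=> j t; rewrite mxE /cat_fun split_l.
have hr : (0 < \rank (kermx A))%N.
  rewrite mxrank_ker subn_gt0; apply: leq_ltn_trans (rank_leq_col A) _.
  by rewrite addn1.
have /existsP [i /existsP [k hik]] : [exists i, exists k, kermx A i k != 0].
  apply: contraT; rewrite negb_exists => /forallP h.
  have h0 : kermx A = 0.
    apply/matrixP => i k.
    move: (h i); rewrite negb_exists => /forallP /(_ k) /negPn /eqP ->.
    by rewrite mxE.
  by move: hr; rewrite h0 mxrank0.
have h0 : row i (kermx A) *m A = 0 by rewrite -row_mul mulmx_ker row0.
have E : forall k, \sum_(j < M) kermx A i j * A j k = 0.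
  move=> k'; transitivity ((row i (kermx A) *m A) ord0 k'); last by rewrite h0 mxE.
  rewrite [RHS]mxE; apply: eq_bigr => j _; congr (_ * _); by rewrite [RHS]mxE.
exists (fun j => kermx A i j); split; first by exists k.
split.
  rewrite -[RHS](E (rshift m ord0)); apply: eq_bigr => j _.
  by rewrite hA1 mulr1.
apply/rowP => t; rewrite summxE [RHS]mxE -[RHS](E (lshift 1 t)); apply: eq_bigr => j _.
by rewrite hA2 [in LHS]mxE mulrC.
Qed.

Lemma step (R : realType) (m : nat) (K : set 'rV[R]_m) (M : nat) (s : R) x
  (c : 'I_M.+1 -> R) (q : 'I_M.+1 -> 'rV[R]_m) :
  (m.+1 < M.+1)%N -> (forall j, K (q j)) -> (forall j, 0 <= c j) ->
  \sum_(j < M.+1) c j = s -> x = \sum_(j < M.+1) c j *: q j ->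
  exists (c' : 'I_M -> R) (q' : 'I_M -> 'rV[R]_m),
    (forall j, K (q' j)) /\ (forall j, 0 <= c' j) /\ \sum_(j < M) c' j = s /\
    x = \sum_(j < M) c' j *: q' j.
Proof.
move=> hM Kq cp cs xE.
have [mu [[j1 hj1] [ms mq]]] := @dep _ _ _ q hM.
have [j0 hj0] : exists j, 0 < mu j.
  apply/existsP; apply: contraT; rewrite negb_exists => /forallP h.
  have h' : forall j, 0 <= - mu j by move=> j; rewrite oppr_ge0 leNgt; exact: h.
  have : - mu j1 = 0.
    apply: (@psumr_eq0P _ _ xpredT (fun j => - mu j) (fun j _ => h' j)) => //.
    by rewrite sumrN ms oppr0.
  by move/eqP; rewrite oppr_eq0 (negbTE hj1).
case: (arg_minP (fun j => c j / mu j) (hj0 : (fun j => 0 < mu j) j0)) => js hjs hmin.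
set t := c js / mu js.
have t0 : 0 <= t by rewrite /t divr_ge0 // ltW.
pose c1 j := c j - t * mu j.
have c1p : forall j, 0 <= c1 j.
  move=> j; rewrite /c1 subr_ge0.
  have [mp|mn] := ltP 0 (mu j).
    by rewrite -ler_pdivlMr //; exact: (hmin j mp).
  by apply: le_trans (cp j); rewrite mulr_ge0_le0.
have c1s : c1 js = 0.
  by rewrite /c1 /t divfK ?subrr // gt_eqF.
have c1sum : \sum_(j < M.+1) c1 j = s.
  by rewrite /c1 sumrB -mulr_sumr ms mulr0 subr0.
have c1x : x = \sum_(j < M.+1) c1 j *: q j.
  rewrite /c1 (eq_bigr (fun j => c j *: q j - t *: (mu j *: q j))); last first.
    by move=> j _; rewrite scalerBl scalerA.
  by rewrite sumrB -scaler_sumr mq scaler0 subr0.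
exists (fun k => c1 (lift js k)), (fun k => q (lift js k)).
split; first by move=> k; exact: Kq.
split; first by move=> k; exact: c1p.
split.
  by rewrite -c1sum (bigD1_ord js) //= c1s add0r.
by rewrite c1x (bigD1_ord js) //= c1s scale0r add0r.
Qed.

Lemma reduce (R : realType) (m : nat) (K : set 'rV[R]_m) (s : R) x :
  cone K s x -> exists M (c : 'I_M -> R) (q : 'I_M -> 'rV[R]_m),
    (M <= m.+1)%N /\ (forall j, K (q j)) /\ (forall j, 0 <= c j) /\
    \sum_(j < M) c j = s /\ x = \sum_(j < M) c j *: q j.
Proof.
move=> [M [c [q [Kq [cp [cs xE]]]]]].
elim: M c q Kq cp cs xE => [|M IH] c q Kq cp cs xE.
  by exists 0%N, c, q.
have [le|lt] := leqP M.+1 m.+1; first by exists M.+1, c, q.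
have [c' [q' [Kq' [cp' [cs' xE']]]]] := @step _ _ K M _ _ c q lt Kq cp cs xE.
exact: IH cs' xE'.
Qed.

Lemma round (R : realType) (m : nat) (K : set 'rV[R]_m) (eps : R) (n : nat) x :
  K 0 -> 0 <= eps -> (forall q, K q -> euclid_norm q <= eps) ->
  cone K n%:R x -> exists y, msum_pow K n y /\ euclid_dist x y <= m.+1%:R * eps.
Proof.
move=> K0 e0 hK /reduce [M [c [q [hM [Kq [cp [cs xE]]]]]]].
exists (\sum_(j < M) (Num.truncn (c j))%:R *: q j); split.
  apply: (@msum_mono _ _ K _ n _ K0 _ (@msum_sum _ _ K M (fun j => Num.truncn (c j)) q K0 Kq)).
  rewrite -(ler_nat R) natr_sum -cs; apply: ler_sum => j _.
  by rewrite truncn_le.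
rewrite /euclid_dist xE -sumrB.
apply: le_trans; first exact: norm_sum.
apply: (@le_trans _ _ (\sum_(j < M) eps)).
  apply: ler_sum => j _; rewrite -scalerBl normZ.
  have [h1 h2] := andP (truncn_itv (cp j)).
  rewrite -[eps]mul1r; apply: ler_pM => //; last (by exact: hK); try exact: norm_ge0.
  rewrite ger0_norm ?subr_ge0 // lerBlDl.
  by move: h2; rewrite -natr1 addrC => /ltW.
rewrite sumr_const card_ord -[eps *+ M]mulr_natl; apply: ler_wpM2r => //.
by rewrite ler_nat.
Qed.

Theorem lemma2p2p5 (R : realType) (m : nat) (K : set 'rV[R]_m) (eps : R) :
  compact K ->
  (forall x, K x -> K (- x)) ->
  K 0 ->
  (forall x y, K x -> K y -> euclid_dist x y <= eps) ->
  forall n : nat,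
    GH_dist_le (msum_pow K n) (conv_hull (msum_pow K n)) (m.+1%:R * eps).
Proof.
move=> _ _ K0 hd n e e0.
have e0' : 0 <= eps by have := hd 0 0 K0 K0; rewrite /euclid_dist subrr norm0.
have hK : forall q, K q -> euclid_norm q <= eps.
  by move=> q Kq; have := hd q 0 Kq K0; rewrite /euclid_dist subr0.
have hr : 0 <= m.+1%:R * eps + e by rewrite addr_ge0 ?mulr_ge0 // ltW.
exists 'rV[R]_m, (@euclid_dist R m), id, id.
split; first exact: euclid_metric.
split; first by move=> x y.
split; first by move=> x y.
split.
  move=> a Ka; exists a; split.
    exists 1%N, (fun _ => 1), (fun _ => a); split => //; split => //.
    by rewrite !big_ord1 scale1r.
  by rewrite /euclid_dist subrr norm0.
move=> b [N [w [p [hp [hw [ws ->]]]]]].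
have := @hull_cone _ _ K n N w p hp hw; rewrite -mulr_suml ws mul1r => hc.
have [y [hy hdy]] := @round _ _ K eps n _ K0 e0' hK hc.
exists y; split => //.
have [_ [_ [hsym _]]] := euclid_metric R m.
rewrite hsym; apply: le_trans hdy _.
by rewrite lerDl ltW.
Qed.
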